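(* Let $k\ge1$. For all $\ell$ with $k<\ell\le n+1$ and all $r\in\{0,1,\dots,k\}$, $$\mathbb{E}[v(\mathrm{ALG}^{\ge\ell}_r)]\ \ge\ \sum_{j=\ell}^{n}\frac{a_{\ell,j-1}}{j}\,\mathbb{E}[v(\mathcal{A}(U^{\le j}))]\sum_{r'=0}^{r-1}\ \sum_{\substack{M\subseteq\{\ell,\dots,j-1\}\\|M|=r'}}\ \prod_{i\in M}\frac{k-1}{i},$$ where $a_{\ell,j-1}=\prod_{i=\ell}^{j-1}\left(1-\frac{k}{i}\right)$ (an empty product equals $1$).
   Context: Let $U$ be a finite ground set of $n$ items and $k\ge1$ an integer. Let $v\colon 2^U\to\mathbb{R}_{\ge0}$ be monotone and submodular. The items arrive one per round (rounds $1,\dots,n$) in a uniformly random order; $U^{\le \ell}$ denotes the set of items arriving in rounds $1,\dots,\ell$. $\mathcal{A}$ is an offline algorithm that, for every $L\subseteq U$, returns a set $\mathcal{A}(L)\subseteq L$ with $|\mathcal{A}(L)|\le k$, depending only on the set $L$ (e.g. an $\alpha$-approximation for $\max\{v(T):T\subseteq L,|T|\le k\}$). Random sets $\mathrm{ALG}^{\ge\ell}_r\subseteq U$ for $\ell\in\{1,\dots,n+1\}$, $r\in\{0,\dots,k\}$ are defined recursively: $\mathrm{ALG}^{\ge\ell}_0=\emptyset$ for all $\ell$, $\mathrm{ALG}^{\ge n+1}_r=\emptyset$ for all $r$, and for $\ell\in[n]$, $r\ge1$, letting $j$ be the item arriving in round $\ell$: $\mathrm{ALG}^{\ge\ell}_r=\{j\}\cup\mathrm{ALG}^{\ge\ell+1}_{r-1}$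 if $j\in\mathcal{A}(U^{\le\ell})$, and $\mathrm{ALG}^{\ge\ell}_r=\mathrm{ALG}^{\ge\ell+1}_{r}$ otherwise. *)

(* Defs.v *)
From HB Require Import structures.
From mathcomp Require Import all_boot all_order all_algebra.
Set Implicit Arguments. Unset Strict Implicit. Unset Printing Implicit Defensive.
Import Order.TTheory GRing.Theory Num.Theory.
Local Open Scope ring_scope.

Section Defs.
Variable U : finType.

(* An arrival order is a sequence s listing every item of U exactly once;
   the item arriving in round l (1-indexed) is the (l-1)-th entry of s. *)
Definition orders : seq (seq U) := permutations (enum U).

Definition prefix_set (s : seq U) (l : nat) : {set U} := [set x in take l s].

Definition Exp (R : numFieldType) (f : seq U -> R) : R :=
  (\sum_(s <- orders) f s) / (size orders)%:R.

(* algrec A pre rest r computes ALG^{>= l}_r where pre = items of rounds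
   1..l-1 and rest = items of rounds l..n (in order). *)
Fixpoint algrec (A : {set U} -> {set U}) (pre rest : seq U) (r : nat)
  : {set U} :=
  match rest, r with
  | [::], _ => set0
  | _, 0%N => set0
  | j :: rest', r'.+1 =>
      if j \in A [set x in rcons pre j]
      then j |: algrec A (rcons pre j) rest' r'
      else algrec A (rcons pre j) rest' r'.+1
  end.

Definition ALG (A : {set U} -> {set U}) (s : seq U) (l r : nat) : {set U} :=
  algrec A (take l.-1 s) (drop l.-1 s) r.

End Defs.

(* Main.v *)
Require Import Defs.
From HB Require Import structures.
From mathcomp Require Import all_boot all_order all_algebra.
From mathcomp Require Import zify ring lra.
Import Order.TTheory GRing.Theory Num.Theory.
Local Open Scope ring_scope.
Set Implicit Arguments. Unset Strict Implicit. Unset Printing Implicit Defensive.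

Section Alg.
Variable U : finType.
Variable A : {set U} -> {set U}.

Lemma algrec_set rest : forall (pre1 pre2 : seq U) r,
  [set x in pre1] = [set x in pre2] -> algrec A pre1 rest r = algrec A pre2 rest r.
Proof.
elim: rest => [|j rest IH] pre1 pre2 [|r] H //=.
have H' : [set x in rcons pre1 j] = [set x in rcons pre2 j].
  apply/setP => y; rewrite !inE !mem_rcons !in_cons.
  by move/setP: H => /(_ y); rewrite !inE => ->.
by rewrite H' (IH _ _ _ H') (IH _ _ _ H').
Qed.

Lemma algrec_mono rest : forall (pre : seq U) r,
  algrec A pre rest r \subset algrec A pre rest r.+1.
Proof.
elim: rest => [|j rest IH] pre [|r] /=; rewrite ?sub0set //.
by case: ifP => _; [apply: setUS; apply: IH | apply: IH].
Qed.

Lemma take_drop_gcat (g : seq U -> seq U) l (s : seq U) :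
  size (g (take l s)) = size (take l s) ->
  take l (g (take l s) ++ drop l s) = g (take l s) /\
  drop l (g (take l s) ++ drop l s) = drop l s.
Proof.
move=> hg; case: (leqP l (size s)) => h.
  have hs : size (g (take l s)) = l by rewrite hg size_take_min (minn_idPl h).
  by rewrite take_size_cat // drop_size_cat.
have hd : drop l s = [::] by apply: drop_oversize; exact: ltnW.
have hs : (size (g (take l s)) <= l)%N by rewrite hg size_take_min geq_minl.
by rewrite hd cats0 take_oversize // drop_oversize.
Qed.

Definition Rf m l (s : seq U) := rot m (take l s) ++ drop l s.
Definition Rb m l (s : seq U) := rotr m (take l s) ++ drop l s.

Lemma RfK m l : cancel (Rf m l) (Rb m l).
Proof.
move=> s; rewrite /Rb /Rf.
have [-> ->] := @take_drop_gcat (rot m) l s (size_rot _ _).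
by rewrite rotK cat_take_drop.
Qed.

Lemma RbK m l : cancel (Rb m l) (Rf m l).
Proof.
move=> s; rewrite /Rb /Rf.
have [-> ->] := @take_drop_gcat (rotr m) l s (size_rotr _ _).
by rewrite rotrK cat_take_drop.
Qed.

Lemma perm_Rf m l s : perm_eq (Rf m l s) s.
Proof. by rewrite /Rf -[X in perm_eq _ X](cat_take_drop l s) perm_cat2r perm_rot. Qed.

Lemma perm_Rb m l s : perm_eq (Rb m l s) s.
Proof. by rewrite /Rb -[X in perm_eq _ X](cat_take_drop l s) perm_cat2r perm_rotr. Qed.

Lemma sum_rot (R : zmodType) m l (f : seq U -> R) :
  \sum_(s <- orders U) f (rot m (take l s) ++ drop l s) = \sum_(s <- orders U) f s.
Proof.
have -> : \sum_(s <- orders U) f (rot m (take l s) ++ drop l s)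
   = \sum_(s <- map (Rf m l) (orders U)) f s by rewrite big_map.
apply: perm_big; apply: uniq_perm.
- rewrite map_inj_uniq ?permutations_uniq //; exact: can_inj (@RfK m l).
- exact: permutations_uniq.
- move=> y; apply/mapP/idP.
  + case=> x hx ->; rewrite /orders mem_permutations in hx; rewrite mem_permutations.
    exact: (perm_trans (perm_Rf _ _ _) hx).
  + move=> hy; exists (Rb m l y); last by rewrite RbK.
    rewrite /orders mem_permutations in hy; rewrite mem_permutations.
    exact: (perm_trans (perm_Rb _ _ _) hy).
Qed.

End Alg.

Section Key.
Variables (R : realFieldType) (U : finType) (k : nat) (v : {set U} -> R).
Hypothesis v_nonneg : forall S, 0 <= v S.
Hypothesis v_mono : forall S T : {set U}, S \subset T -> v S <= v T.
Hypothesis v_submod : forall S T : {set U}, v (S :|: T) + v (S :&: T) <= v S + v T.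

Lemma submod_seq (S : {set U}) (e : seq U) :
  v ([set x in e] :|: S) - v S <= \sum_(x <- e) (v (x |: S) - v S).
Proof.
elim: e => [|x e IH].
  rewrite big_nil.
  have -> : [set x in [::] : seq U] :|: S = S by apply/setP => y; rewrite !inE.
  by rewrite subrr.
rewrite big_cons.
have eq : [set y in x :: e] :|: S = (x |: S) :|: ([set y in e] :|: S).
  apply/setP => y; rewrite !inE.
  by case: (y == x); case: (y \in e); case: (y \in S).
have hs := v_submod (x |: S) ([set y in e] :|: S).
have hm : v S <= v ((x |: S) :&: ([set y in e] :|: S)).
  by apply: v_mono; apply/subsetP => y yS; rewrite !inE yS !orbT.
rewrite eq; lra.
Qed.

Lemma key_ineq (L B S' S : {set U}) : B \subset L -> S' \subset S -> (#|B| <= k)%N ->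
  (#|L|%:R - k%:R) * v S + (k%:R - 1) * v S' + v B <=
  \sum_(x in L) v (if x \in B then x |: S' else S).
Proof.
move=> BL SS Bk.
have E1 : \sum_(x in L) v (if x \in B then x |: S' else S) =
   \sum_(x in L) v S + \sum_(x in L) (if x \in B then v (x |: S') - v S else 0).
  rewrite -big_split /=; apply: eq_bigr => x _; case: (x \in B).
    by rewrite addrC subrK.
  by rewrite addr0.
have E2 : \sum_(x in L) (if x \in B then v (x |: S') - v S else 0) =
   \sum_(x in B) (v (x |: S') - v S).
  rewrite [RHS]big_mkcond [LHS]big_mkcond /=; apply: eq_bigr => x _.
  case xB: (x \in B); last by case: (x \in L).
  by rewrite (subsetP BL _ xB).
have E3 : \sum_(x in B) (v (x |: S') - v S) =
   \sum_(x in B) (v (x |: S') - v S') - (v S - v S') *+ #|B|.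
  rewrite -sumr_const -sumrB; apply: eq_bigr => x _; ring.
have E4 : v (B :|: S') - v S' <= \sum_(x in B) (v (x |: S') - v S').
  have := submod_seq S' (enum B).
  have -> : [set x in enum B] = B by apply/setP => y; rewrite inE mem_enum.
  by rewrite big_enum.
have E5 : v B <= v (B :|: S') by apply: v_mono; exact: subsetUl.
have hSS : v S' <= v S by exact: v_mono.
have hc : (#|B|%:R : R) <= k%:R by rewrite ler_nat.
have hp : (v S - v S') * #|B|%:R <= (v S - v S') * k%:R.
  by apply: ler_wpM2l => //; rewrite subr_ge0.
rewrite E1 E2 E3 sumr_const -[v S *+ #|L|]mulr_natr -[(v S - v S') *+ #|B|]mulr_natr.
lra.
Qed.

Lemma rot_step (A : {set U} -> {set U}) (x0 : U) (s : seq U) l r :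
  uniq s -> (l <= size s)%N ->
  \sum_(i < l) v (ALG A (rot i.+1 (take l s) ++ drop l s) l r.+1) =
  \sum_(x in [set y in take l s]) v (if x \in A [set y in take l s]
       then x |: algrec A (take l s) (drop l s) r
       else algrec A (take l s) (drop l s) r.+1).
Proof.
move=> us hl.
set t := take l s; set d := drop l s.
have st : size t = l by rewrite size_takel.
set G := fun x => v (if x \in A [set y in t] then x |: algrec A t d r
       else algrec A t d r.+1).
transitivity (\sum_(i < l) G (nth x0 t i)).
  apply: eq_bigr => i _.
  have hi : (i < size t)%N by rewrite st.
  set p := drop i.+1 t ++ take i t.
  have hrot : rot i.+1 t = rcons p (nth x0 t i).
    by rewrite /rot (take_nth x0 hi) rcons_cat.
  have sp : size p = l.-1.
    rewrite size_cat size_drop size_takel ?st; last exact: ltnW.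
    have := ltn_ord i; lia.
  rewrite /ALG hrot cat_rcons take_size_cat // drop_size_cat //=.
  have hset : [set y in rcons p (nth x0 t i)] = [set y in t].
    by apply/setP => y; rewrite !inE -hrot mem_rot.
  by rewrite hset /G (algrec_set A d _ hset) (algrec_set A d _ hset).
rewrite -(big_mkord xpredT (fun i => G (nth x0 t i))) -st -(big_nth x0 xpredT G).
rewrite big_uniq; last exact: take_uniq.
by apply: eq_bigl => x; rewrite inE.
Qed.

End Key.

Section Rec.
Variables (R : realFieldType) (U : finType) (k : nat) (v : {set U} -> R)
  (A : {set U} -> {set U}).
Hypothesis v_nonneg : forall S, 0 <= v S.
Hypothesis v_mono : forall S T : {set U}, S \subset T -> v S <= v T.
Hypothesis v_submod : forall S T : {set U}, v (S :|: T) + v (S :&: T) <= v S + v T.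
Hypothesis A_sub : forall L : {set U}, A L \subset L.
Hypothesis A_card : forall L, (#|A L| <= k)%N.

Lemma orders_perm (s : seq U) : s \in orders U -> uniq s /\ size s = #|U|.
Proof.
rewrite /orders mem_permutations => h; split.
  by rewrite (perm_uniq h) enum_uniq.
by rewrite (perm_size h) cardE.
Qed.

Lemma recE (x0 : U) l r : (l <= #|U|)%N ->
  (l%:R - k%:R) * \sum_(s <- orders U) v (ALG A s l.+1 r.+1)
  + (k%:R - 1) * \sum_(s <- orders U) v (ALG A s l.+1 r)
  + \sum_(s <- orders U) v (A (prefix_set s l))
  <= l%:R * \sum_(s <- orders U) v (ALG A s l r.+1).
Proof.
move=> hl.
have -> : l%:R * \sum_(s <- orders U) v (ALG A s l r.+1) =
   \sum_(i < l) \sum_(s <- orders U) v (ALG A (rot i.+1 (take l s) ++ drop l s) l r.+1).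
  rewrite [RHS](eq_bigr (fun _ => \sum_(s <- orders U) v (ALG A s l r.+1))); last first.
    by move=> i _; rewrite (sum_rot _ _ (fun s => v (ALG A s l r.+1))).
  by rewrite sumr_const card_ord mulr_natl.
rewrite exchange_big /= !mulr_sumr -!big_split /=.
rewrite big_seq [X in _ <= X]big_seq; apply: ler_sum => s hs.
have [us ss] := orders_perm hs.
rewrite (rot_step v A x0 r us); last by rewrite ss.
have cL : #|[set y in take l s]| = l.
  by rewrite cardsE (card_uniqP (take_uniq l us)) size_takel // ss.
have := key_ineq v_mono v_submod (A_sub [set y in take l s])
  (algrec_mono A (drop l s) (take l s) r) (A_card [set y in take l s]).
by rewrite cL.
Qed.

Lemma Exp_ge0 (f : seq U -> R) : (forall s, 0 <= f s) -> 0 <= Exp f.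
Proof.
move=> hf; rewrite /Exp divr_ge0 //; first by apply: sumr_ge0 => s _.
Qed.

Lemma orders_size_gt0 : (0 < size (orders U))%N.
Proof.
have h : enum U \in orders U by rewrite /orders mem_permutations perm_refl.
by case: (orders U) h.
Qed.

Lemma recExp l r : (1 <= k)%N -> (0 < l <= #|U|)%N ->
  (1 - k%:R / l%:R) * Exp (fun s => v (ALG A s l.+1 r.+1))
  + ((k - 1)%:R / l%:R) * Exp (fun s => v (ALG A s l.+1 r))
  + Exp (fun s => v (A (prefix_set s l))) / l%:R
  <= Exp (fun s => v (ALG A s l r.+1)).
Proof.
move=> hk /andP[l0 hl].
have [x0 _] : exists x0 : U, x0 \in U by apply/card_gt0P; exact: leq_trans l0 hl.
have h := recE x0 r hl.
rewrite /Exp natrB //.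
set N := (size (orders U))%:R.
have N0 : 0 < N by rewrite ltr0n orders_size_gt0.
have L0 : 0 < (l%:R : R) by rewrite ltr0n.
move: h.
set X := \sum_(s <- orders U) v (ALG A s l r.+1).
set Y := \sum_(s <- orders U) v (ALG A s l.+1 r.+1).
set Z := \sum_(s <- orders U) v (ALG A s l.+1 r).
set W := \sum_(s <- orders U) v (A (prefix_set s l)).
move=> h.
have e1 : (1 - k%:R / l%:R) * (Y / N) + ((k%:R - 1) / l%:R) * (Z / N) + W / N / l%:R
   = ((l%:R - k%:R) * Y + (k%:R - 1) * Z + W) * (l%:R * N)^-1.
  by field; rewrite lt0r_neq0 ?lt0r_neq0.
have e2 : X / N = (l%:R * X) * (l%:R * N)^-1 by field; rewrite lt0r_neq0 ?lt0r_neq0.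
rewrite e1 e2; apply: ler_wpM2r => //.
by rewrite invr_ge0 mulr_ge0 // ltW.
Qed.

End Rec.

Section Comb.
Variables (R : realFieldType) (N : nat) (w : 'I_N -> R).

Definition Tsum (S : {set 'I_N}) (m : nat) :=
  \sum_(M : {set 'I_N} | (M \subset S) && (#|M| == m)) \prod_(i in M) w i.

Definition Qs (S : {set 'I_N}) (r : nat) := \sum_(r' < r) Tsum S r'.

Lemma sub_U1 (x : 'I_N) (M S : {set 'I_N}) : x \notin M ->
  (M \subset x |: S) = (M \subset S).
Proof.
move=> xM; apply/idP/idP.
  move/subsetP => h; apply/subsetP => y yM.
  have := h y yM; rewrite !inE; case/orP => // /eqP e.
  by move: yM; rewrite e (negbTE xM).
move=> h; apply: subset_trans h _; apply/subsetP => y yS; by rewrite !inE yS orbT.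
Qed.

Lemma notsub (x : 'I_N) (M S : {set 'I_N}) : x \notin S -> x \in M -> (M \subset S) = false.
Proof.
move=> xS xM; apply/negbTE/negP => /subsetP /(_ x xM).
by rewrite (negbTE xS).
Qed.

Lemma Tsum_U1 (x : 'I_N) (S : {set 'I_N}) m : x \notin S ->
  Tsum (x |: S) m = Tsum S m + (if m is m'.+1 then w x * Tsum S m' else 0).
Proof.
move=> xS; rewrite /Tsum (bigID (fun M : {set 'I_N} => x \in M)) /= addrC.
congr (_ + _).
  apply: eq_bigl => M.
  case xM: (x \in M); rewrite /= ?andbF ?andbT.
    by rewrite (notsub xS xM).
  by rewrite sub_U1 ?xM.
case: m => [|m'].
  apply: big_pred0 => M.
  case/boolP: (M == set0) => [/eqP ->|/negbTE h]; first by rewrite in_set0 !andbF.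
  by rewrite cards_eq0 h andbF.
rewrite (reindex_onto (fun M => x |: M) (fun M => M :\ x)) /=; last first.
  by move=> M /andP[_ xM]; rewrite setD1K.
rewrite mulr_sumr; apply: eq_big => M.
  case xM: (x \in M).
    have ne : (x |: M) :\ x != M.
      by apply/negP => /eqP e; move: xM; rewrite -e setD11.
    by rewrite (negbTE ne) andbF (notsub xS xM).
  rewrite setU1K ?xM // eqxx andbT setU11 andbT cardsU1 xM /= add1n eqSS.
  by rewrite subUset sub1set setU11 /= sub_U1 ?xM.
move=> /andP[_ /eqP e].
have xM : x \notin M by rewrite -e setD11.
by rewrite big_setU1.
Qed.

Lemma Tsum0 m : Tsum set0 m = (m == 0)%:R.
Proof.
case: m => [|m].
  rewrite /Tsum (big_pred1 set0) ?big_set0 //.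
  by move=> M; rewrite subset0 cards_eq0 andbb.
rewrite /Tsum big_pred0 // => M; rewrite subset0.
by case/boolP: (M == set0) => [/eqP ->|]; rewrite ?cards0.
Qed.

Lemma Qs0 (S : {set 'I_N}) : Qs S 0 = 0.
Proof. by rewrite /Qs big_ord0. Qed.

Lemma Qs_set0 r : Qs set0 r.+1 = 1.
Proof.
rewrite /Qs big_ord_recl Tsum0 big1 ?addr0 // => i _.
by rewrite Tsum0 lift0.
Qed.

Lemma Qs_U1 (x : 'I_N) (S : {set 'I_N}) r : x \notin S ->
  Qs (x |: S) r.+1 = Qs S r.+1 + w x * Qs S r.
Proof.
move=> xS; rewrite /Qs !big_ord_recl Tsum_U1 // addr0.
under eq_bigr => i _ do rewrite Tsum_U1 // lift0.
rewrite big_split /= -mulr_sumr addrA.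
congr (_ + _ + _).
Qed.

End Comb.

Section Main.
Variables (R : realFieldType) (U : finType) (k : nat) (v : {set U} -> R)
  (A : {set U} -> {set U}).
Hypothesis v_nonneg : forall S, 0 <= v S.
Hypothesis v_mono : forall S T : {set U}, S \subset T -> v S <= v T.
Hypothesis v_submod : forall S T : {set U}, v (S :|: T) + v (S :&: T) <= v S + v T.
Hypothesis A_sub : forall L : {set U}, A L \subset L.
Hypothesis A_card : forall L, (#|A L| <= k)%N.
Hypothesis hk : (1 <= k)%N.

Let n := #|U|.
Let w := fun i : 'I_n.+1 => ((k - 1)%:R / (nat_of_ord i)%:R : R).

Definition Sset l j : {set 'I_n.+1} := [set i : 'I_n.+1 | (l <= i < j)%N].

Definition G l r :=
  \sum_(l <= j < n.+1)
     ((\prod_(l <= i < j) (1 - k%:R / i%:R)) / j%:R)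
     * Exp (fun s => v (A (prefix_set s j)))
     * Qs w (Sset l j) r.

Lemma Sset_nil l : Sset l l = set0.
Proof.
apply/setP => i; rewrite !inE; case: (leqP l i) => //= h.
all: by rewrite ?ltnNge ?h.
Qed.

Lemma Sset_split l j (hl : (l < n.+1)%N) : (l < j)%N ->
  Sset l j = (Ordinal hl) |: Sset l.+1 j /\ Ordinal hl \notin Sset l.+1 j.
Proof.
move=> hlj; split; last by rewrite inE ltnn.
apply/setP => i; rewrite !inE -val_eqE /=.
case e: (val i == l).
  by move/eqP: e => ->; rewrite leqnn hlj.
by rewrite /= leq_eqVlt eq_sym e.
Qed.

Lemma G_rec l r : (l <= n)%N ->
  G l r.+1 = Exp (fun s => v (A (prefix_set s l))) / l%:R
     + (1 - k%:R / l%:R) * (G l.+1 r.+1 + ((k - 1)%:R / l%:R) * G l.+1 r).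
Proof.
move=> hl; have hl' : (l < n.+1)%N by [].
rewrite /G big_ltn // big_geq // Sset_nil Qs_set0 mul1r mulr1 mulrC.
congr (_ + _).
rewrite [X in _ = _ * (_ + X)]mulr_sumr -big_split /= mulr_sumr.
apply: eq_big_nat => j /andP[hj1 hj2].
have [-> hn] := Sset_split hl' hj1.
rewrite Qs_U1 // big_ltn //= /w /=.
ring.
Qed.

Lemma G0 l : G l 0 = 0.
Proof. by rewrite /G big1 // => j _; rewrite Qs0 mulr0. Qed.

Lemma main_ind d : forall l, (l + d)%N = n.+1 -> (k < l)%N -> forall r,
  G l r <= Exp (fun s => v (ALG A s l r)).
Proof.
elim: d => [|d IH] l hld hkl r.
  rewrite addn0 in hld; rewrite /G hld big_geq //.
  by apply: Exp_ge0.
have hl : (l <= n)%N by rewrite /n; lia.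
case: r => [|r].
  by rewrite G0; apply: Exp_ge0.
have hl1 : (l.+1 + d)%N = n.+1 by lia.
have hkl1 : (k < l.+1)%N by lia.
have IH1 := IH l.+1 hl1 hkl1 r.+1.
have IH2 := IH l.+1 hl1 hkl1 r.
have rec := recExp v_mono v_submod A_sub A_card r hk (l := l).
have l0 : (0 < l)%N by lia.
have := rec; rewrite l0 hl => /(_ isT) {}rec.
rewrite G_rec //.
have L0 : 0 < (l%:R : R) by rewrite ltr0n.
have ha0 : 0 <= 1 - k%:R / l%:R :> R.
  by rewrite subr_ge0 ler_pdivrMr // mul1r ler_nat ltnW.
have ha1 : 1 - k%:R / l%:R <= 1 :> R.
  by rewrite lerBlDr lerDl divr_ge0.
have hw0 : 0 <= (k - 1)%:R / l%:R :> R by rewrite divr_ge0.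
have E20 : 0 <= Exp (fun s => v (ALG A s l.+1 r)) by apply: Exp_ge0.
move: rec IH1 IH2 ha0 ha1 hw0 E20.
set a := 1 - k%:R / l%:R.
set ww := (k - 1)%:R / l%:R.
set E1 := Exp (fun s => v (ALG A s l.+1 r.+1)).
set E2 := Exp (fun s => v (ALG A s l.+1 r)).
set G1 := G l.+1 r.+1.
set G2 := G l.+1 r.
set e := Exp (fun s => v (A (prefix_set s l))).
set E := Exp (fun s => v (ALG A s l r.+1)).
move=> rec IH1 IH2 ha0 ha1 hw0 E20.
have h1 : a * G1 <= a * E1 by apply: ler_wpM2l.
have h2 : a * (ww * G2) <= a * (ww * E2).
  by apply: ler_wpM2l => //; apply: ler_wpM2l.
have h3 : a * (ww * E2) <= ww * E2 by apply: ler_piMl => //; apply: mulr_ge0.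
lra.
Qed.

End Main.

Theorem mainTheorem7 (R : realFieldType) (U : finType) (k : nat)
  (v : {set U} -> R) (A : {set U} -> {set U})
  (v_nonneg : forall S, 0 <= v S)
  (v_mono : forall S T : {set U}, S \subset T -> v S <= v T)
  (v_submod : forall S T : {set U}, v (S :|: T) + v (S :&: T) <= v S + v T)
  (A_sub : forall L : {set U}, A L \subset L)
  (A_card : forall L, (#|A L| <= k)%N)
  (hk : (1 <= k)%N) (l r : nat)
  (hl1 : (k < l)%N) (hl2 : (l <= #|U|.+1)%N) (hr : (r <= k)%N) :
  Exp (fun s => v (ALG A s l r)) >=
  \sum_(l <= j < #|U|.+1)
     ((\prod_(l <= i < j) (1 - k%:R / i%:R)) / j%:R)
     * Exp (fun s => v (A (prefix_set s j)))
     * \sum_(r' < r)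
         \sum_(M : {set 'I_#|U|.+1} |
                 (M \subset [set i : 'I_#|U|.+1 | (l <= i < j)%N])
                 && (#|M| == r'))
           \prod_(i in M) ((k - 1)%:R / (nat_of_ord i)%:R).
Proof.
have hd : (l + (#|U|.+1 - l))%N = #|U|.+1 by lia.
have := main_ind v_nonneg v_mono v_submod A_sub A_card hk hd hl1 r.
by rewrite /G /Qs /Tsum /Sset.
Qed.
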